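(* For $n\ge1$ and all $k\ge0$, $$S(n,k)=T(n,2k)+T(n,2k+1),\qquad P(n,k)=T(n,2k+1)+T(n,2k+2);$$ equivalently, $(1+x)T_n(x)=xS_n(x^2)+x^2P_n(x^2)$ for $n\ge1$.
   Context: For a permutation $\pi$ of $[n]=\{1,\dots,n\}$, ${\rm des}(\pi)=\#\{i\in[n-1]:\pi(i)>\pi(i+1)\}$. A double descent is an index $i\in[n-2]$ with $\pi(i)>\pi(i+1)>\pi(i+2)$; $\pi$ is simsun if for every $k\in[n]$ the subword of $\pi$ consisting of the letters in $[k]$ (in order of appearance) has no double descents. Let $\mathcal{RS}_n$ be the set of simsun permutations of $[n]$. $S(n,k)=\#\{\pi\in\mathcal{RS}_n:{\rm des}(\pi)=k\}$, $S_n(x)=\sum_kS(n,k)x^k$. An interior peak is an index $i\in\{2,\dots,n-1\}$ with $\pi(i-1)<\pi(i)>\pi(i+1)$, ${\rm pk}(\pi)$ their number, $P(n,k)=\#\{\pi\in\mathcal{RS}_n:{\rm pk}(\pi)=k\}$, $P_n(x)=\sum_kP(n,k)x^k$. The number of up-down runs ${\rm uprun}(\pi)$ is the number of alternating runs of the sequence $0,\pi(1),\dots,\pi(n)$ (one plus the number of interior positions where the sequence changes direction); $T(n,k)=\#\{\pi\in\mathcal{RS}_n:{\rm uprun}(\pi)=k\}$ and $T_n(x)=\sum_kT(n,k)x^k$. *)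

(* Defs.v *)
From mathcomp Require Import all_boot all_order.
From mathcomp Require Import perm.
Set Implicit Arguments. Unset Strict Implicit. Unset Printing Implicit Defensive.

(* A permutation pi of [n] is represented by s : {perm 'I_n};
   pi(i+1) corresponds to (s i) + 1, i.e. the one-line word of pi is
   [seq (val (s i)).+1 | i <- enum 'I_n], with letters in 1..n. *)
Definition word (n : nat) (s : {perm 'I_n}) : seq nat :=
  [seq (val (s i)).+1 | i <- enum 'I_n].

Definition des_seq (w : seq nat) : nat :=
  \sum_(i < (size w).-1) (nth 0 w i.+1 < nth 0 w i).

Definition has_ddes (w : seq nat) : bool :=
  [exists i : 'I_(size w), (i.+2 < size w) &&
     (nth 0 w i.+1 < nth 0 w i) && (nth 0 w i.+2 < nth 0 w i.+1)].

Definition simsun (n : nat) (s : {perm 'I_n}) : bool :=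
  [forall k : 'I_n, ~~ has_ddes [seq x <- word s | x <= k.+1]].

Definition pk_seq (w : seq nat) : nat :=
  \sum_(i < (size w).-2) ((nth 0 w i < nth 0 w i.+1) && (nth 0 w i.+2 < nth 0 w i.+1)).

Definition altruns (a : seq nat) : nat :=
  1 + \sum_(i < (size a).-2)
        ((nth 0 a i < nth 0 a i.+1) != (nth 0 a i.+1 < nth 0 a i.+2)).

Definition uprun (n : nat) (s : {perm 'I_n}) : nat := altruns (0 :: word s).

Definition S_num (n k : nat) : nat :=
  #|[set s : {perm 'I_n} | simsun s && (des_seq (word s) == k)]|.
Definition P_num (n k : nat) : nat :=
  #|[set s : {perm 'I_n} | simsun s && (pk_seq (word s) == k)]|.
Definition T_num (n k : nat) : nat :=
  #|[set s : {perm 'I_n} | simsun s && (uprun s == k)]|.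

(* Main.v *)
Require Import Defs.
From mathcomp Require Import all_boot all_order.
From mathcomp Require Import perm.
From mathcomp Require Import zify.
Set Implicit Arguments. Unset Strict Implicit. Unset Printing Implicit Defensive.

Definition Fst (w : seq nat) : bool := if w is x :: y :: _ then y < x else false.
Fixpoint Lst (w : seq nat) : bool :=
  match w with
  | x :: u => match u with [::] => false | y :: t => if t is [::] then y < x else Lst u end
  | [::] => false end.
Fixpoint desr (w : seq nat) : nat :=
  match w with x :: u => Fst (x :: u) + desr u | [::] => 0 end.
Fixpoint nodd (w : seq nat) : bool :=
  match w with x :: u => ~~ (Fst (x :: u) && Fst u) && nodd u | [::] => true end.
Fixpoint slots (N : nat) (w : seq nat) : seq (seq nat) :=
  match w with [::] => [:: [:: N]] | x :: t => (N :: x :: t) :: map (cons x) (slots N t) end.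
Definition AS N w := filter nodd (slots N w).
Definition pairF w := (desr w, Fst w).
Definition pairL w := (desr w, Lst w).

Lemma slots_cases N t w : w \in slots N t ->
  (exists w', w = N :: w') \/ (exists h t' w', [/\ t = h :: t', w = h :: w' & w' \in slots N t']).
Proof.
case: t => [|h t'] /=; first by rewrite inE => /eqP ->; left; exists [::].
rewrite inE => /orP [/eqP ->|]; first by left; eexists.
by case/mapP => w' Hw' ->; right; exists h, t', w'.
Qed.

Lemma slots_nil N t w : w \in slots N t -> w <> [::].
Proof. by case/slots_cases => [[w' ->]|[h [t' [w' [_ -> _]]]]]. Qed.

Lemma nodd_cons_slot N x t w : x < N -> all (fun y => y < N) t -> w \in slots N t ->
  nodd (x :: t) -> nodd (x :: w) = nodd w.
Proof.
move=> xN HN Hw Hxt /=.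
case/slots_cases: Hw => [[w' ->]|[h [t' [w' [Et -> Hw']]]]] /=.
  by rewrite (leq_gtF (ltnW xN)).
subst t; case/slots_cases: Hw' => [[w'' ->]|[h' [t'' [w'' [Et' -> _]]]]] /=.
  by move: HN => /= /andP [hN _]; rewrite (leq_gtF (ltnW hN)) andbF.
by subst t'; move: Hxt => /= /andP [/negbTE -> _].
Qed.

Lemma AS_cons N x t : all (fun y => y < N) (x :: t) -> nodd (x :: t) ->
  AS N (x :: t) = (if Fst (x :: t) then [::] else [:: N :: x :: t]) ++ map (cons x) (AS N t).
Proof.
move=> /= /andP [xN HN] Hxt; rewrite /AS /= Hxt xN /=.
rewrite andbT filter_map.
have -> : [seq x0 <- slots N t | preim (cons x) nodd x0] = [seq x0 <- slots N t | nodd x0].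
  apply: eq_in_filter => w Hw.
  exact: (nodd_cons_slot xN HN Hw Hxt).
by case: (match t with [::] => false | y :: _ => y < x end).
Qed.

Lemma inv_L x t : t != [::] -> nodd (x :: t) ->
  2 * desr (x :: t) + ~~ Lst (x :: t) <= size t + Fst (x :: t).
Proof.
elim: t x => [//|t0 t' IH] x _.
case: t' IH => [|t1 t''] IH /=.
  by case: (t0 < x).
move=> /andP [H1 H2].
have := @IH t0 isT H2; move: H1 => /=.
by case: (t0 < x); case: (t1 < t0) => /=; lia.
Qed.

Lemma inv_F x t : nodd (x :: t) -> 2 * desr (x :: t) + ~~ Fst (x :: t) <= (size t).+1.
Proof.
case: t => [|t0 t'] Hnd; first by [].
have := @inv_L x (t0 :: t') isT Hnd; case: (Fst _) => /=; lia.
Qed.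

Lemma inv_L2 x t : t != [::] -> nodd (x :: t) -> 2 * desr (x :: t) <= (size t).+1.
Proof. move=> Ht Hnd; have := inv_L Ht Hnd; case: (Fst _); case: (Lst _) => /=; lia. Qed.

Ltac splitp p := repeat match goal with
 | |- context [p ?z] => let E := fresh "E" in case E: (p z)
 end.

Definition MFc m d (b : bool) : seq (nat * bool) :=
  if b then (d, false) :: nseq (m - 2 * d) (d.+1, true) ++ nseq d (d, true)
  else (d.+1, true) :: nseq (m - 2 * d - 1) (d.+1, false) ++ nseq d.+1 (d, false).

Lemma AS_nil N : AS N [::] = [:: [:: N]].
Proof. by []. Qed.

Lemma MF_step (a b : bool) d m (rl : seq (nat * bool)) : ~~ (a && b) -> 2 * d + ~~ b <= m ->
  perm_eq ((if b then [::] else [:: (d.+1, true)]) ++ rl) (MFc m d b) ->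
  perm_eq ((if a then [::] else [:: ((a + d).+1, true)]) ++
           ((if b then [::] else [:: (d.+1, false)]) ++ map (fun pr => (a + pr.1, a)) rl))
          (MFc m.+1 (a + d) a).
Proof.
move=> Hab Hi Hp; apply/seq.permP => p.
have := seq.permP Hp (preim (fun pr => (a + pr.1, a)) p); clear Hp.
rewrite !count_cat count_map /MFc.
move: Hab Hi; case: a; case: b => //= _ Hi H.
all: rewrite ?count_cat ?count_nseq /= ?count_nseq /= ?add0n ?add1n in H *.
all: move: H; splitp p; rewrite /= ?mul1n ?mul0n; lia.
Qed.

Lemma MF_closed N x t : all (fun y => y < N) (x :: t) -> nodd (x :: t) ->
  perm_eq (map pairF (AS N (x :: t))) (MFc (size t).+1 (desr (x :: t)) (Fst (x :: t))).
Proof.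
elim: t x => [|t0 t' IH] x HN Hnd.
  rewrite AS_cons //; move: HN => /= /andP [xN _].
  rewrite /AS /=.
  rewrite /pairF /= xN (leq_gtF (ltnW xN)); exact: perm_refl.
have HN' : all (fun y => y < N) (t0 :: t') by case/andP: HN.
have Hnd' : nodd (t0 :: t') by case/andP: Hnd.
have IHt := IH t0 HN' Hnd'.
rewrite AS_cons // (@AS_cons N t0 t') //.
rewrite (@AS_cons N t0 t') // in IHt.
set R := [seq t0 :: i | i <- AS N t'].
move: HN => /= /andP [xN /andP [t0N _]].
have E1 : map pairF (if Fst [:: x, t0 & t'] then [::] else [:: [:: N, x, t0 & t']]) =
   if Fst [:: x, t0 & t'] then [::]
   else [:: ((Fst [:: x, t0 & t'] + desr (t0 :: t')).+1, true)].
  have Ep : pairF [:: N, x, t0 & t'] = ((Fst [:: x, t0 & t'] + desr (t0 :: t')).+1, true).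
    by rewrite /pairF /= xN.
  by rewrite -Ep; case: ifP.
have E2 : map pairF (if Fst (t0 :: t') then [::] else [:: [:: N, t0 & t']]) =
   if Fst (t0 :: t') then [::] else [:: ((desr (t0 :: t')).+1, true)].
  have Ep : pairF [:: N, t0 & t'] = ((desr (t0 :: t')).+1, true).
    by rewrite /pairF /= t0N.
  by rewrite -Ep; case: ifP.
have E3 : map pairF (map (cons x) (if Fst (t0 :: t') then [::] else [:: [:: N, t0 & t']])) =
   if Fst (t0 :: t') then [::] else [:: ((desr (t0 :: t')).+1, false)].
  have Ep : pairF [:: x, N, t0 & t'] = ((desr (t0 :: t')).+1, false).
    by rewrite /pairF /= t0N (leq_gtF (ltnW xN)).
  by rewrite -Ep; case: ifP.
have E4 : map pairF (map (cons x) R) =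
    map (fun pr => (Fst [:: x, t0 & t'] + pr.1, Fst [:: x, t0 & t'])) (map pairF R).
  by rewrite /R -!map_comp; apply: eq_map.
rewrite map_cat E1 map_cat map_cat E3 E4.
rewrite map_cat E2 in IHt.
apply: MF_step => //.
  by move: Hnd => /= /andP [].
exact: inv_F.
Qed.

Lemma ML_step (a b L : bool) d m (rl : seq (nat * bool)) : ~~ (a && b) -> 2 * d + ~~ L <= m + b ->
  perm_eq ((if b then [::] else [:: (d.+1, L)]) ++ rl) (MFc m.+1 d L) ->
  perm_eq ((if a then [::] else [:: ((a + d).+1, L)]) ++
           ((if b then [::] else [:: (d.+1, L)]) ++ map (fun pr => (a + pr.1, pr.2)) rl))
          (MFc m.+2 (a + d) L).
Proof.
move=> Hab Hi Hp; apply/seq.permP => p.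
have := seq.permP Hp (preim (fun pr => (a + pr.1, pr.2)) p); clear Hp.
rewrite !count_cat count_map /MFc.
move: Hab Hi; case: a; case: b; case: L => //= _ Hi H.
all: rewrite ?count_cat ?count_nseq /= ?count_nseq /= ?add0n ?add1n in H *.
all: move: H; splitp p; rewrite /= ?mul1n ?mul0n; lia.
Qed.

Lemma ML_closed N x t : all (fun y => y < N) (x :: t) -> nodd (x :: t) ->
  perm_eq (map pairL (AS N (x :: t))) (MFc (size t).+1 (desr (x :: t)) (Lst (x :: t))).
Proof.
elim: t x => [|t0 t' IH] x HN Hnd.
  rewrite AS_cons //; move: HN => /= /andP [xN _].
  rewrite /AS /= /pairL /= xN (leq_gtF (ltnW xN)); exact: perm_refl.
have HN' : all (fun y => y < N) (t0 :: t') by case/andP: HN.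
have Hnd' : nodd (t0 :: t') by case/andP: Hnd.
case: t' IH HN HN' Hnd Hnd' => [|t1 t''] IH HN HN' Hnd Hnd'.
  rewrite AS_cons // (@AS_cons N t0 [::]) //.
  move: HN => /= /andP [xN /andP [t0N _]].
  rewrite /AS /= /pairL /=.
  case E: (t0 < x); rewrite /= ?E ?xN ?t0N ?(leq_gtF (ltnW xN)) ?(leq_gtF (ltnW t0N)) /=; by [].
set t' := t1 :: t''.
have IHt := IH t0 HN' Hnd'.
rewrite AS_cons // (@AS_cons N t0 t') //.
rewrite (@AS_cons N t0 t') // in IHt.
set R := [seq t0 :: i | i <- AS N t'].
move: HN => /= /andP [xN /andP [t0N _]].
have E1 : map pairL (if Fst [:: x, t0 & t'] then [::] else [:: [:: N, x, t0 & t']]) =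
   if Fst [:: x, t0 & t'] then [::]
   else [:: ((Fst [:: x, t0 & t'] + desr (t0 :: t')).+1, Lst (t0 :: t'))].
  have Ep : pairL [:: N, x, t0 & t'] = ((Fst [:: x, t0 & t'] + desr (t0 :: t')).+1, Lst (t0 :: t')).
    by rewrite /pairL /= xN.
  by rewrite -Ep; case: ifP.
have E2 : map pairL (if Fst (t0 :: t') then [::] else [:: [:: N, t0 & t']]) =
   if Fst (t0 :: t') then [::] else [:: ((desr (t0 :: t')).+1, Lst (t0 :: t'))].
  have Ep : pairL [:: N, t0 & t'] = ((desr (t0 :: t')).+1, Lst (t0 :: t')).
    by rewrite /pairL /= t0N.
  by rewrite -Ep; case: ifP.
have E3 : map pairL (map (cons x) (if Fst (t0 :: t') then [::] else [:: [:: N, t0 & t']])) =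
   if Fst (t0 :: t') then [::] else [:: ((desr (t0 :: t')).+1, Lst (t0 :: t'))].
  have Ep : pairL [:: x, N, t0 & t'] = ((desr (t0 :: t')).+1, Lst (t0 :: t')).
    by rewrite /pairL /= t0N (leq_gtF (ltnW xN)).
  by rewrite -Ep; case: ifP.
have E4 : map pairL (map (cons x) R) =
    map (fun pr => (Fst [:: x, t0 & t'] + pr.1, pr.2)) (map pairL R).
  rewrite /R -!map_comp; apply/eq_in_map => u Hu.
  move: Hu; rewrite mem_filter => /andP [_ Hu].
  by case: u Hu => [|u0 u'] Hu; first by case: (slots_nil Hu).
rewrite map_cat E1 map_cat map_cat E3 E4.
rewrite map_cat E2 in IHt.
apply: ML_step => //.
  by move: Hnd => /= /andP [].
exact: (@inv_L t0 t').
Qed.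

Fixpoint RS m : seq (seq nat) :=
  if m is m'.+1 then filter nodd (flatten (map (slots m'.+1) (RS m'))) else [:: [::]].
Definition simwl n w := all (fun k => nodd (filter (fun x => x <= k) w)) (iota 1 n).

Lemma iota_rc m : iota 1 m.+1 = rcons (iota 1 m) m.+1.
Proof. by rewrite -cats1 -[m.+1]addn1 iotaD /= add1n addn1. Qed.

Lemma slots_perm N s w : w \in slots N s -> perm_eq w (N :: s).
Proof.
elim: s w => [|x t IH] w /=; first by rewrite inE => /eqP ->.
rewrite inE => /orP [/eqP -> //|/mapP [w' Hw' ->]].
have H := IH _ Hw'.
apply: (@perm_trans _ (x :: N :: t)); first by rewrite perm_cons.
by rewrite (perm_catCA [:: x] [:: N] t).
Qed.

Lemma slots_filter N s w (a : pred nat) : w \in slots N s -> ~~ a N -> filter a w = filter a s.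
Proof.
move=> + HN; elim: s w => [|x t IH] w /=; first by rewrite inE => /eqP -> /=; rewrite (negbTE HN).
rewrite inE => /orP [/eqP -> /=|/mapP [w' Hw' ->] /=]; first by rewrite (negbTE HN).
by rewrite (IH _ Hw').
Qed.

Lemma slots_rem N w : N \in w -> w \in slots N (rem N w).
Proof.
elim: w => [//|y t IH]; rewrite inE.
case: (eqVneq y N) => [->|ne] /=.
  by rewrite eqxx => _; case: t {IH} => [|z t]; rewrite /= ?inE ?eqxx.
rewrite (negbTE ne) => Ht.
by rewrite /= inE; apply/orP; right; apply/mapP; exists t => //; apply: IH.
Qed.

Lemma slots_uniq N s : N \notin s -> uniq (slots N s).
Proof.
elim: s => [//|x t IH]; rewrite inE negb_or => /andP [Nx Nt] /=.
rewrite map_inj_uniq ?IH // ?andbT; last by move=> u v [].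
apply/mapP => [[w _ [E _]]]; by rewrite E eqxx in Nx.
Qed.

Lemma slots_remK N s w : N \notin s -> w \in slots N s -> rem N w = s.
Proof.
elim: s w => [|x t IH] w /=; first by move=> _; rewrite inE => /eqP -> /=; rewrite eqxx.
rewrite inE negb_or => /andP [Nx Nt].
rewrite inE => /orP [/eqP -> /=|/mapP [w' Hw' ->] /=]; first by rewrite eqxx.
by rewrite eq_sym (negbTE Nx) (IH _ Nt Hw').
Qed.

Lemma RS_mem m w : (w \in RS m) = perm_eq w (iota 1 m) && simwl m w.
Proof.
elim: m w => [|m IH] w.
  rewrite /= inE /simwl /= andbT; apply/eqP/idP => [->//|Hp].
  by apply/eqP; rewrite -size_eq0 (perm_size Hp).
rewrite [RS m.+1]/= mem_filter; apply/andP/andP.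
  move=> [Hnd /flatten_mapP [s Hs Hw]]; move: Hs; rewrite IH => /andP [Hp Hsim].
  have Hpw : perm_eq w (iota 1 m.+1).
    apply: perm_trans (slots_perm Hw) _.
    by rewrite iota_rc perm_sym perm_rcons perm_cons perm_sym.
  split => //.
  rewrite /simwl iota_rc all_rcons; apply/andP; split.
    rewrite (_ : filter _ w = w) //; apply/all_filterP/allP => x Hx.
    by move: (perm_mem Hpw x); rewrite Hx mem_iota => /esym /andP [_ H] /=; lia.
  rewrite -(eq_in_all (a1 := fun k => nodd (filter (fun x => x <= k) s))) //.
  move=> k; rewrite mem_iota => Hk /=.
  by rewrite (slots_filter (a := fun x => x <= k) Hw) //; lia.
move=> [Hp Hsim].
have Nw : m.+1 \in w by rewrite (perm_mem Hp) mem_iota; lia.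
have Hw := slots_rem Nw.
have Hr := perm_to_rem Nw.
move: Hsim; rewrite /simwl iota_rc all_rcons => /andP [Hlast Hall].
split.
  rewrite (_ : filter _ w = w) // in Hlast; apply/all_filterP/allP => x Hx.
  by move: (perm_mem Hp x); rewrite Hx mem_iota => /esym /andP [_ H] /=; lia.
apply/flatten_mapP; exists (rem m.+1 w) => //.
rewrite IH; apply/andP; split.
  have : perm_eq (m.+1 :: rem m.+1 w) (m.+1 :: iota 1 m).
    apply: perm_trans (perm_trans _ Hp) _; first by rewrite perm_sym.
    by rewrite iota_rc perm_rcons.
  by rewrite perm_cons.
rewrite /simwl -(eq_in_all (a1 := fun k => nodd (filter (fun x => x <= k) w))) //.
move=> k; rewrite mem_iota => Hk /=.
by rewrite (slots_filter (a := fun x => x <= k) Hw) //; lia.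
Qed.

Lemma uniq_flatten_map (T S : eqType) (f : T -> seq S) s : uniq s ->
  (forall x, x \in s -> uniq (f x)) ->
  (forall x y z, x \in s -> y \in s -> z \in f x -> z \in f y -> x = y) ->
  uniq (flatten (map f s)).
Proof.
elim: s => [//|x s IH] /= /andP [xs Us] Hu Hd.
rewrite cat_uniq Hu ?inE ?eqxx //= IH //; last first.
- by move=> a b z Ha Hb; apply: Hd; rewrite inE ?Ha ?Hb orbT.
- by move=> a Ha; apply: Hu; rewrite inE Ha orbT.
rewrite andbT; apply/hasP => [[z /flatten_mapP [y Hy Hzy] Hzx]].
have E : x = y by apply: (Hd x y z); rewrite ?inE ?eqxx ?Hy ?orbT.
by rewrite E Hy in xs.
Qed.

Lemma RS_uniq m : uniq (RS m).
Proof.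
elim: m => [//|m IH] /=; apply: filter_uniq.
have NN : forall s, s \in RS m -> m.+1 \notin s.
  move=> s; rewrite RS_mem => /andP [Hp _]; rewrite (perm_mem Hp) mem_iota; lia.
apply: uniq_flatten_map => //.
  by move=> s Hs; apply: slots_uniq; apply: NN.
move=> x y z Hx Hy Hzx Hzy.
by rewrite -(slots_remK (NN _ Hx) Hzx) (slots_remK (NN _ Hy) Hzy).
Qed.

Lemma RS_props m s : s \in RS m ->
  [/\ size s = m, all (fun y => y < m.+1) s, all (fun y => 0 < y) s, uniq s & nodd s].
Proof.
case: m => [|m]; first by rewrite inE => /eqP ->.
rewrite RS_mem => /andP [Hp Hs].
have Hal : all (fun y => y < m.+2) s.
  by apply/allP => x Hx; move: (perm_mem Hp x); rewrite Hx mem_iota => /esym /andP [_ H] /=; lia.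
split => //.
- by rewrite (perm_size Hp) size_iota.
- by apply/allP => x Hx; move: (perm_mem Hp x); rewrite Hx mem_iota => /esym /andP [H _] /=; lia.
- by rewrite (perm_uniq Hp) iota_uniq.
move: Hs; rewrite /simwl iota_rc all_rcons => /andP [+ _].
rewrite (_ : filter _ s = s) //; apply/all_filterP/allP => x Hx.
by move/allP: Hal => /(_ x Hx) /=; lia.
Qed.

Lemma RS_S m : RS m.+1 = filter nodd (flatten (map (slots m.+1) (RS m))).
Proof. by []. Qed.

Lemma perm_flatten_in (T S : eqType) (f g : T -> seq S) s :
  (forall x, x \in s -> perm_eq (f x) (g x)) ->
  perm_eq (flatten (map f s)) (flatten (map g s)).
Proof.
elim: s => [//|x s IH] H /=.
apply: perm_cat; first by apply: H; rewrite inE eqxx.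
by apply: IH => y Hy; apply: H; rewrite inE Hy orbT.
Qed.

Lemma key m : 0 < m -> perm_eq (map pairF (RS m)) (map pairL (RS m)).
Proof.
elim: m => [//|m IH] _.
case: m IH => [|m] IH; first by [].
have IH' := IH isT.
rewrite (RS_S m.+1) filter_flatten !map_flatten -!map_comp.
apply: (@perm_trans _ (flatten (map (fun pr => MFc m.+1 pr.1 pr.2) (map pairF (RS m.+1))))).
  rewrite -map_comp; apply: perm_flatten_in => s Hs.
  case: (RS_props Hs) => Hsz Hal _ _ Hnd.
  case: s Hs Hsz Hal Hnd => [|x t] Hs Hsz Hal Hnd; first by [].
  move: Hsz => /= [Hsz]; subst m; exact: MF_closed.
apply: (@perm_trans _ (flatten (map (fun pr => MFc m.+1 pr.1 pr.2) (map pairL (RS m.+1))))).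
  by apply: perm_flatten; apply: perm_map.
rewrite -map_comp perm_sym; apply: perm_flatten_in => s Hs.
case: (RS_props Hs) => Hsz Hal _ _ Hnd.
case: s Hs Hsz Hal Hnd => [|x t] Hs Hsz Hal Hnd; first by [].
move: Hsz => /= [Hsz]; subst m; exact: ML_closed.
Qed.

Fixpoint pkr (w : seq nat) : nat :=
  match w with
  | x :: u => (match u with y :: z :: _ => (x < y) && (z < y) | _ => false end) + pkr u
  | [::] => 0 end.
Fixpoint altr (w : seq nat) : nat :=
  match w with
  | x :: u => (match u with y :: z :: _ => (x < y) != (y < z) | _ => false end) + altr u
  | [::] => 0 end.

Lemma sum_shift n (f : nat -> nat) : \sum_(i < n.+1) f i = f 0 + \sum_(i < n) f i.+1.
Proof. by rewrite big_ord_recl; congr (_ + _); apply: eq_bigr => i _; rewrite lift0. Qed.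

Lemma des_seqE w : des_seq w = desr w.
Proof.
elim: w => [|x u IH]; first by rewrite /des_seq big_ord0.
case: u IH => [|y u'] IH; first by rewrite /des_seq big_ord0.
rewrite (_ : desr (x :: y :: u') = Fst (x :: y :: u') + desr (y :: u')) // -IH.
rewrite /des_seq /= big_ord_recl; congr (_ + _); apply: eq_bigr => i _; by rewrite lift0.
Qed.

Lemma pk_seqE w : pk_seq w = pkr w.
Proof.
elim: w => [|x u IH]; first by rewrite /pk_seq big_ord0.
case: u IH => [|y [|z u']] IH; try by rewrite /pk_seq big_ord0.
rewrite (_ : pkr [:: x, y, z & u'] = ((x < y) && (z < y)) + pkr [:: y, z & u']) // -IH.
rewrite /pk_seq /= big_ord_recl; congr (_ + _); apply: eq_bigr => i _; by rewrite lift0.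
Qed.

Lemma altrunsE w : altruns w = 1 + altr w.
Proof.
rewrite /altruns; congr (_ + _).
elim: w => [|x u IH]; first by rewrite big_ord0.
case: u IH => [|y [|z u']] IH; try by rewrite big_ord0.
rewrite (_ : altr [:: x, y, z & u'] = ((x < y) != (y < z)) + altr [:: y, z & u']) // -IH.
rewrite /= big_ord_recl; congr (_ + _); apply: eq_bigr => i _; by rewrite lift0.
Qed.

Lemma exists_iota n (p : nat -> bool) : [exists i : 'I_n, p i] = has p (iota 0 n).
Proof.
apply/existsP/hasP => [[i Hi]|[i]]; first by exists (nat_of_ord i) => //; rewrite mem_iota /=.
by rewrite mem_iota /= => Hi Hp; exists (Ordinal Hi).
Qed.

Lemma has_ddesE w : has_ddes w = ~~ nodd w.
Proof.
rewrite /has_ddes (exists_iota _ (fun i => (i.+2 < size w) && (nth 0 w i.+1 < nth 0 w i)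
     && (nth 0 w i.+2 < nth 0 w i.+1))).
elim: w => [//|x u IH].
rewrite [size _]/= [iota 0 _]/= (_ : iota 1 (size u) = map (addn 1) (iota 0 (size u))); last by rewrite -iotaDl. rewrite [has _ (_ :: _)]/= has_map /preim /=.
rewrite negb_and negbK -IH.
congr (_ || _).
  by case: u {IH} => [|y [|z u']] //=; rewrite andbF.
Qed.

Lemma pkr_des w : uniq w -> nodd w -> pkr w + Fst w = desr w.
Proof.
elim: w => [//|x u IH] /andP [xu Uu] Hnd.
case: u IH xu Uu Hnd => [|y [|z u']] IH xu Uu Hnd; [by [] | by rewrite /=; case: (y < x) |].
have Hnd' : nodd [:: y, z & u'] by case/andP: Hnd.
have := IH Uu Hnd'.
have xy : x != y by apply: contraNneq xu => ->; rewrite inE eqxx.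
move: Hnd => /= /andP [H1 _].
move: xy H1; rewrite /=.
case Hxy: (x < y); case Hzy: (z < y); case Hyx: (y < x) => //= *; lia.
Qed.

Lemma altr_gen t p x : p != x -> uniq (x :: t) -> nodd [:: p, x & t] ->
  (p < x) + altr [:: p, x & t] =
  2 * desr (x :: t) + ~~ (if t is [::] then x < p else Lst (x :: t)).
Proof.
elim: t p x => [|y t' IH] p x px.
  by move=> _ _ /=; move: px; case Hpx: (p < x); case Hxp: (x < p) => //= *; lia.
move=> /andP [xu Uu] Hnd.
have xy : x != y by apply: contraNneq xu => ->; rewrite inE eqxx.
have Hnd' : nodd [:: x, y & t'] by case/andP: Hnd.
have := IH x y xy Uu Hnd'.
rewrite (_ : altr [:: p, x, y & t'] = ((p < x) != (x < y)) + altr [:: x, y & t']) //.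
rewrite (_ : desr [:: x, y & t'] = (y < x) + desr (y :: t')) //.
rewrite (_ : Lst [:: x, y & t'] = if t' is [::] then y < x else Lst (y :: t')) //.
move: Hnd => /= /andP [H1 _]; move: H1 xy px.
case Hpx: (p < x); case Hxy: (x < y); case Hyx: (y < x); case Hxp : (x < p) => //= *; lia.
Qed.

Lemma uprun_w w : w != [::] -> uniq w -> all (fun y => 0 < y) w -> nodd w ->
  altruns (0 :: w) = 2 * desr w + ~~ Lst w.
Proof.
case: w => [//|x t] _ U Hpos Hnd.
have x0 : 0 < x by case/andP: Hpos.
have := @altr_gen t 0 x; rewrite altrunsE x0 => -> //.
- by case: t {U Hpos Hnd}.
- by rewrite eq_sym -lt0n.
Qed.

Lemma simsunE n (s : {perm 'I_n}) : simsun s = simwl n (word s).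
Proof.
rewrite /simsun /simwl; apply/forallP/allP => [H k|H k].
  rewrite mem_iota => /andP [k1 kn].
  have kn' : k.-1 < n by lia.
  have := H (Ordinal kn'); rewrite has_ddesE negbK /=.
  by rewrite prednK //; lia.
rewrite has_ddesE negbK; apply: (H k.+1).
by rewrite mem_iota /=; have := ltn_ord k; lia.
Qed.

Lemma word_perm n (s : {perm 'I_n}) : perm_eq (word s) (iota 1 n).
Proof.
have E : word s = map succn (map val (map s (enum 'I_n))) by rewrite /word -!map_comp.
rewrite E (_ : iota 1 n = map succn (map val (enum 'I_n))); last first.
  rewrite val_enum_ord (_ : iota 1 n = map (addn 1) (iota 0 n)); last by rewrite -iotaDl.
  by apply: eq_map => i; rewrite add1n.
apply: perm_map; apply: perm_map.
apply: uniq_perm; first by rewrite map_inj_uniq ?enum_uniq //; apply: perm_inj.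
  exact: enum_uniq.
move=> i; rewrite mem_enum; apply/mapP; exists ((s^-1)%g i); first by rewrite mem_enum.
by rewrite permKV.
Qed.

Lemma word_inj n : injective (@word n).
Proof.
move=> s1 s2; rewrite /word => /eq_in_map H.
apply/permP => i; apply: val_inj.
by have := H i; rewrite mem_enum => /(_ isT) [].
Qed.

Lemma words_perm n :
  perm_eq (map (@word n) (enum {perm 'I_n})) (permutations (iota 1 n)).
Proof.
have U : uniq (map (@word n) (enum {perm 'I_n})).
  by rewrite map_inj_uniq ?enum_uniq //; apply: word_inj.
apply: uniq_perm => //; first exact: permutations_uniq.
have Hsub : {subset map (@word n) (enum {perm 'I_n}) <= permutations (iota 1 n)}.
  by move=> w /mapP [s _ ->]; rewrite mem_permutations word_perm.
have Hsz : size (permutations (iota 1 n)) <= size (map (@word n) (enum {perm 'I_n})).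
  rewrite size_permutations ?iota_uniq // size_iota size_map -cardE.
  by rewrite (card_Sn n).
by case: (uniq_min_size U Hsub Hsz).
Qed.

Lemma perms_RS n : perm_eq (filter (simwl n) (permutations (iota 1 n))) (RS n).
Proof.
apply: uniq_perm; first by rewrite filter_uniq ?permutations_uniq.
  exact: RS_uniq.
by move=> w; rewrite mem_filter mem_permutations RS_mem andbC.
Qed.

Lemma card_RS n (Q : pred (seq nat)) :
  #|[set s : {perm 'I_n} | simsun s && Q (word s)]| = count Q (RS n).
Proof.
rewrite cardsE cardE /enum_mem size_filter -enumT.
rewrite (eq_count (a2 := preim (@word n) (fun w => simwl n w && Q w))); last first.
  move=> s /=; change (simsun s && Q (word s) = simwl n (word s) && Q (word s)); by rewrite simsunE.
rewrite -count_map (seq.permP (words_perm n)).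
rewrite -(seq.permP (perms_RS n)) count_filter.
by apply: eq_count => w; rewrite /= andbC.
Qed.

Lemma count_split (T : eqType) (s : seq T) (a b c : pred T) :
  (forall x, x \in s -> (a x : nat) = b x + c x) -> count a s = count b s + count c s.
Proof.
elim: s => [//|x s IH] H /=.
rewrite (H x) ?inE ?eqxx // IH; first lia.
by move=> y Hy; apply: H; rewrite inE Hy orbT.
Qed.

Theorem mainTheorem8 (n : nat) : 1 <= n ->
  forall k : nat,
    S_num n k = T_num n (2 * k) + T_num n (2 * k + 1) /\
    P_num n k = T_num n (2 * k + 1) + T_num n (2 * k + 2).
Proof.
move=> n1 k.
have ES j : S_num n j = count (fun w => des_seq w == j) (RS n) by exact: card_RS.
have EP j : P_num n j = count (fun w => pk_seq w == j) (RS n) by exact: card_RS.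
have ET j : T_num n j = count (fun w => altruns (0 :: w) == j) (RS n) by exact: card_RS.
have Hw : forall w, w \in RS n ->
    [/\ des_seq w = desr w, pk_seq w + Fst w = desr w, (Fst w -> 0 < desr w)
      & altruns (0 :: w) = 2 * desr w + ~~ Lst w].
  move=> w Hw; case: (RS_props Hw) => Hsz Hal Hpos U Hnd.
  have wn : w != [::] by apply/eqP => E; rewrite E /= in Hsz; lia.
  split.
  - exact: des_seqE.
  - by rewrite pk_seqE pkr_des.
  - by case: w {Hw Hsz Hal Hpos U Hnd wn} => [|x [|y t]] //= ->.
  - exact: uprun_w.
rewrite ES EP !ET; split.
  apply: count_split => w Hw'; have [E1 _ _ E4] := Hw w Hw'.
  rewrite E1 E4; case: (Lst w) => /=; lia.
rewrite (count_split (b := fun w => pairF w == (k, false)) (c := fun w => pairF w == (k.+1, true))); last first.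
  move=> w Hw'; have [_ E2 E3 _] := Hw w Hw'.
  rewrite /pairF -E2; move: E3 E2; case: (Fst w) => /= E3 E2.
    rewrite !xpair_eqE /=; lia.
  rewrite !xpair_eqE /=; lia.
rewrite (count_split (a := fun w => altruns (0 :: w) == 2 * k + 1)
    (b := fun w => pairL w == (k, false)) (c := pred0)); last first.
  move=> w Hw'; have [_ _ _ E4] := Hw w Hw'.
  rewrite /pairL E4 !xpair_eqE; case: (Lst w) => /=; lia.
rewrite (count_split (a := fun w => altruns (0 :: w) == 2 * k + 2)
    (b := fun w => pairL w == (k.+1, true)) (c := pred0)); last first.
  move=> w Hw'; have [_ _ _ E4] := Hw w Hw'.
  rewrite /pairL E4 !xpair_eqE; case: (Lst w) => /=; lia.
rewrite !count_pred0 !addn0.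
have K := seq.permP (key n1).
rewrite -!(count_map pairF (pred1 _)) -!(count_map pairL (pred1 _)).
by rewrite !K.
Qed.
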